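(* Let $M$ be a matroid, $\psi\colon E(M)\to\Gamma$ a labeling to an abelian group $\Gamma$, and $w\colon E(M)\to\mathbb{R}$ a weight function. Suppose $M$ has at least one non-zero basis. Then for every minimum-weight basis $B$ of $M$ there exists a non-zero basis $B^*$ of $M$ that has minimum weight among all non-zero bases and satisfies $|B\setminus B^*|\le 1$.
   Context: For $S\subseteq E$, $\psi(S):=\sum_{x\in S}\psi(x)$ and $w(S):=\sum_{x\in S}w(x)$. A set $S$ is non-zero if $\psi(S)\neq 0$. *)

(* Defs.v *)
From HB Require Import structures.
From mathcomp Require Import all_boot all_order all_algebra.
From mathcomp Require Import reals.
Set Implicit Arguments. Unset Strict Implicit. Unset Printing Implicit Defensive.
Import Order.TTheory GRing.Theory Num.Theory.
Local Open Scope ring_scope.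

Record matroid (E : finType) := Matroid {
  indep : {set E} -> bool;
  indep0 : indep set0;
  indep_sub : forall A B : {set E}, A \subset B -> indep B -> indep A;
  indep_aug : forall A B : {set E}, indep A -> indep B -> (#|A| < #|B|)%N ->
     exists2 x, x \in B :\: A & indep (x |: A)
}.

Definition is_basis (E : finType) (M : matroid E) (B : {set E}) : bool :=
  indep M B && [forall X : {set E}, (indep M X && (B \subset X)) ==> (X == B)].

Definition lab_sum (E : finType) (G : zmodType) (psi : E -> G) (S : {set E}) : G :=
  \sum_(x in S) psi x.

Definition wsum (E : finType) (R : realType) (w : E -> R) (S : {set E}) : R :=
  \sum_(x in S) w x.

Definition nonzero (E : finType) (G : zmodType) (psi : E -> G) (S : {set E}) : bool :=
  lab_sum psi S != 0.

Definition min_weight_basis (E : finType) (R : realType) (M : matroid E)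
  (w : E -> R) (B : {set E}) : Prop :=
  is_basis M B /\ forall B' : {set E}, is_basis M B' -> wsum w B <= wsum w B'.

Definition min_weight_nonzero_basis (E : finType) (G : zmodType) (R : realType)
  (M : matroid E) (psi : E -> G) (w : E -> R) (B : {set E}) : Prop :=
  is_basis M B /\ nonzero psi B /\
  forall B' : {set E}, is_basis M B' -> nonzero psi B' -> wsum w B <= wsum w B'.

(* Main.v *)
Require Import Defs.
From HB Require Import structures.
From mathcomp Require Import all_boot all_order all_algebra.
From mathcomp Require Import reals.
From mathcomp Require Import lra.
Import Order.TTheory GRing.Theory Num.Theory.
Local Open Scope ring_scope.
Set Implicit Arguments. Unset Strict Implicit.

Section Aux.
Variables (E : finType) (M : matroid E).

Lemma basis_max B x : is_basis M B -> indep M (x |: B) -> x \in B.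
Proof.
case/andP=> _ /forallP /(_ (x |: B)) H Hi.
move: H; rewrite Hi subsetUr /= => /eqP <-.
by rewrite setU11.
Qed.

Lemma indep_card_basis B X : is_basis M B -> indep M X -> (#|B| <= #|X|)%N ->
  is_basis M X.
Proof.
move=> hB hX hc; rewrite /is_basis hX /=; apply/forallP=> Y.
apply/implyP=> /andP[hY sXY].
case: (eqVneq Y X) => // neq.
have pXY : X \proper Y by rewrite properEneq eq_sym neq sXY.
have lt : (#|B| < #|Y|)%N by apply: leq_trans (proper_card pXY); rewrite ltnS.
have [x] := indep_aug (proj1 (andP hB)) hY lt.
rewrite inE => /andP[xnB _] /(basis_max hB) xB.
by rewrite xB in xnB.
Qed.

Lemma extend n I J : indep M I -> indep M J -> (#|I| + n = #|J|)%N ->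
  exists K : {set E}, [/\ I \subset K, K \subset I :|: J, indep M K & #|K| = #|J|].
Proof.
elim: n I => [|n IH] I hI hJ hc.
  by exists I; rewrite subxx subsetUl hI -hc addn0.
have lt : (#|I| < #|J|)%N by rewrite -hc addnS ltnS leq_addr.
have [x] := indep_aug hI hJ lt; rewrite inE => /andP[xnI xJ] hx.
have hc' : (#|x |: I| + n = #|J|)%N by rewrite cardsU1 xnI add1n addSnnS.
have [K [s1 s2 s3 s4]] := IH _ hx hJ hc'.
exists K; split => //.
  by apply: subset_trans s1; apply: subsetUr.
apply: (subset_trans s2); apply/subsetP=> y; rewrite !inE.
by case/orP=> [/orP[/eqP->|->]|->]; rewrite ?xJ ?orbT.
Qed.

Lemma sym_exch B Bs e : is_basis M B -> is_basis M Bs -> e \in B -> e \notin Bs ->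
  exists f, [/\ f \in Bs, f \notin B, is_basis M (f |: (B :\ e)) &
              is_basis M (e |: (Bs :\ f))].
Proof.
move=> hB hBs eB enBs.
have iB := proj1 (andP hB); have iBs := proj1 (andP hBs).
set Z := [set g in Bs | ~~ ((g \notin B) && indep M (g |: (B :\ e)))].
have sZ : Z \subset Bs by apply/subsetP=> g; rewrite inE => /andP[].
have iZ : indep M Z by apply: indep_sub sZ iBs.
have iZe : indep M (e |: Z).
  have cZB : (#|Z| <= #|B|)%N.
    rewrite leqNgt; apply/negP=> lt.
    have [x] := indep_aug iB iZ lt; rewrite inE => /andP[xnB xZ] hx.
    have := basis_max hB hx; by rewrite (negPf xnB).
  have [n hn] : exists n, (#|Z| + n = #|B|)%N by exists (#|B| - #|Z|)%N; rewrite subnKC.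
  have [K [s1 s2 s3 s4]] := extend iZ iB hn.
  case eK: (e \in K).
    apply: indep_sub s3; apply/subsetP=> y; rewrite in_setU1 => /orP[/eqP->//|yZ].
    exact: (subsetP s1).
  have iBe : indep M (B :\ e) by apply: indep_sub iB; apply: subsetDl.
  have lt : (#|B :\ e| < #|K|)%N by rewrite s4 (cardsD1 e B) eB.
  have [x] := indep_aug iBe s3 lt; rewrite !inE => /andP[hxe xK] hx.
  have xne : x != e by apply/eqP=> xe; rewrite -xe xK in eK.
  rewrite xne /= in hxe.
  have := subsetP s2 x xK; rewrite inE => /orP[|xB]; last by rewrite xB in hxe.
  by rewrite inE hxe hx /= andbF.
have cZe : (#|e |: Z| <= #|Bs|)%N.
  rewrite leqNgt; apply/negP=> lt.
  have [x] := indep_aug iBs iZe lt; rewrite in_setD in_setU1 => /andP[xnBs].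
  case/orP=> [/eqP->|xZ] hx; last first.
    by move: xZ; rewrite inE => /andP[xBs]; rewrite xBs in xnBs.
  by have := basis_max hBs hx; rewrite (negPf enBs).
have [n hn] : exists n, (#|e |: Z| + n = #|Bs|)%N by exists (#|Bs| - #|e |: Z|)%N; rewrite subnKC.
have [K [s1 s2 s3 s4]] := extend iZe iBs hn.
have [f fK] : exists f, f \in (e |: Bs) :\: K.
  apply/set0Pn; apply/negP=> /eqP h.
  have : (e |: Bs) \subset K by rewrite -setD_eq0 h.
  move/subset_leq_card; rewrite s4 cardsU1 enBs ltnn //.
move: fK; rewrite !inE => /andP[fnK /orP[/eqP fe|fBs]].
  by move: fnK; rewrite fe (subsetP s1) // setU11.
have fnZ : f \notin Z by apply: contra fnK => fZ; apply: (subsetP s1); rewrite in_setU1 fZ orbT.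
move: fnZ; rewrite inE fBs negbK /= => /andP[fnB hf].
exists f; split => //.
  apply: indep_card_basis hB hf _.
  by rewrite cardsU1 in_setD1 (negPf fnB) andbF /= (cardsD1 e B) eB.
have cE : #|e |: (Bs :\ f)| = #|Bs|.
  by rewrite cardsU1 in_setD1 (negPf enBs) andbF /= (cardsD1 f Bs) fBs.
have sub : K \subset e |: (Bs :\ f).
  apply/subsetP=> y yK.
  have yf : y != f by apply: contraNneq fnK => <-.
  have := subsetP s2 y yK; rewrite !in_setU !in_set1 in_setD1 yf /=.
  case/orP=> [/orP[->//|yZ]|->]; last by rewrite orbT.
  by rewrite (subsetP sZ y yZ) orbT.
have eqK : K = e |: (Bs :\ f).
  by apply/eqP; rewrite eqEcard sub cE s4 leqnn.
by rewrite -eqK; apply: indep_card_basis hBs s3 _; rewrite s4.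
Qed.

End Aux.

Lemma sum_swap (E : finType) (V : zmodType) (F : E -> V) (S : {set E}) e f :
  e \in S -> f \notin S ->
  \sum_(x in f |: (S :\ e)) F x = \sum_(x in S) F x - F e + F f.
Proof.
move=> eS fS.
rewrite big_setU1 /=; last by rewrite in_setD1 (negPf fS) andbF.
rewrite (bigD1 e eS) /=.
have -> : \sum_(x in S :\ e) F x = \sum_(i in S | i != e) F i.
  by apply: eq_bigl => x; rewrite in_setD1 andbC.
by rewrite [F e + _]addrC addrK addrC.
Qed.

Theorem lemma3p2 (E : finType) (M : matroid E) (G : zmodType) (psi : E -> G)
  (R : realType) (w : E -> R) :
  (exists B0 : {set E}, is_basis M B0 /\ nonzero psi B0) ->
  forall B : {set E}, min_weight_basis M w B ->
  exists Bs : {set E}, min_weight_nonzero_basis M psi w Bs /\ (#|B :\: Bs| <= 1)%N.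
Proof.
move=> [B0 [hB0 nB0]] B [hB minB].
case nB: (nonzero psi B).
  exists B; split; last by rewrite setDv cards0.
  by split=> //; split=> // B' hB' _; apply: minB.
have psiB : lab_sum psi B = 0 by move/negbT: nB; rewrite /nonzero negbK => /eqP.
have P0 : (fun X => is_basis M X && nonzero psi X) B0 by rewrite /= hB0 nB0.
have [Bs /andP[hBs nBs] minBs] := @Order.TotalTheory.arg_minP _ _ _ B0 [pred X | is_basis M X && nonzero psi X] (wsum w) P0.
have mBs : min_weight_nonzero_basis M psi w Bs.
  split=> //; split=> // B' hB' nB'; apply: minBs; by rewrite inE hB' nB'.
clear hBs nBs minBs; move: {2}#|B :\: Bs| (leqnn #|B :\: Bs|) => n.
elim: n Bs mBs => [|n IH] Bs mBs hn.
  by exists Bs; split => //; apply: leq_trans hn _.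
have [le1|gt1] := leqP #|B :\: Bs| 1; first by exists Bs.
case: mBs => hBs [nBs minBs].
have [e] : exists e, e \in B :\: Bs.
  by apply/set0Pn; rewrite -card_gt0; apply: leq_trans gt1.
rewrite inE => /andP[enBs eB].
have [f [fBs fnB hB1 hB2]] := sym_exch hB hBs eB enBs.
have w1 := minB _ hB1.
rewrite /wsum sum_swap // -/(wsum w B) in w1.
have wfe : w e <= w f by move: w1; rewrite -addrA lerDl addrC subr_ge0.
case nB2: (nonzero psi (e |: (Bs :\ f))).
  apply: (IH (e |: (Bs :\ f))).
    split=> //; split=> // B' hB' nB'.
    apply: le_trans (minBs _ hB' nB').
    rewrite /wsum sum_swap // -/(wsum w Bs).
    by rewrite -addrA gerDl addrC subr_le0.
  have -> : B :\: (e |: (Bs :\ f)) = (B :\: Bs) :\ e.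
    apply/setP=> x; rewrite !inE.
    case: (eqVneq x e) => //= xe; case: (eqVneq x f) => [->|//].
    by rewrite (negPf fnB) !andbF.
  move: hn; rewrite (cardsD1 e (B :\: Bs)) inE enBs eB.
  by rewrite add1n ltnS.
exists (f |: (B :\ e)); split.
  have p2 : lab_sum psi (e |: (Bs :\ f)) = 0.
    by move/negbT: nB2; rewrite /nonzero negbK => /eqP.
  rewrite /lab_sum sum_swap // -/(lab_sum psi Bs) in p2.
  have nB1 : nonzero psi (f |: (B :\ e)).
    rewrite /nonzero /lab_sum sum_swap // -/(lab_sum psi B) psiB sub0r.
    move: nBs; rewrite /nonzero; apply: contra => /eqP h.
    apply/eqP; move: p2; move/eqP: h; rewrite addrC subr_eq0 => /eqP ->.
    by rewrite subrK.
  split=> //; split=> // B' hB' nB'.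
  apply: le_trans (minBs _ hB' nB').
  have w2 := minB _ hB2.
  rewrite /wsum sum_swap // -/(wsum w B) -/(wsum w Bs).
  rewrite /wsum sum_swap // -/(wsum w Bs) in w2.
  rewrite -/(wsum w B) in w2; lra.
have -> : B :\: (f |: (B :\ e)) = [set e].
  apply/setP=> x; rewrite !inE.
  case: (eqVneq x e) => [->|xe]; first by rewrite eB andbT; case: eqVneq => // ef; rewrite -ef eB in fnB.
  case: (eqVneq x f) => [->|_]; first by rewrite (negPf fnB) andbF.
  by rewrite /= andNb.
by rewrite cards1.
Qed.
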